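(* Let $n\geq 3$ and let $u=u_1u_2\cdots u_N$ be a u-p-cycle or a u-p-word for $n$-permutations. If $u_k=\Diamond$, then $u_{k+n}=\Diamond$ and $u_{k-n}=\Diamond$, where in the case of a u-p-word this is asserted only for those of the indices $k+n$, $k-n$ that lie in $\{1,\ldots,N\}$, and in the case of a u-p-cycle the indices are taken modulo $N$.
   Context: An $n$-permutation is a permutation of $\{1,\ldots,n\}$. For a word $w$ of distinct numbers, $\mathrm{red}(w)$ is obtained by replacing the $i$-th smallest letter by $i$. Let $\Diamond$ be a symbol not among the integers. A word $f=f_1\cdots f_n$ over the positive integers together with $\Diamond$, whose integer letters are pairwise distinct, covers an $n$-permutation $\pi$ if one can substitute real numbers for the occurrences of $\Diamond$ (independently) so that the resulting word has $n$ pairwise distinct entries and reduces to $\pi$; equivalently, $f_i<f_j\iff\pi_i<\pi_j$ for all positions $i,j$ holding integers. A u-p-word (universal partial word) for $n$-permutations is a word $u_1\cdots u_N$, $N\geq n$, over this alphabet containing at least one $\Diamond$, such that every factor $u_i\cdots u_{i+n-1}$ ($1\leq i\leq N-n+1$) has pairwise distinct integer letters and every $n$-permutation is covered by exactly one of these factors. A u-p-cycle is a cyclic word $u_1\cdots u_N$, $N\geq n$, containing at least one $\Diamond$, with indices read modulo $N$, satisfying the same conditions for its $N$ cyclic factors $u_iu_{i+1}\cdots u_{i+n-1}$, $1\leq i\leq N$. *)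

(* Defs.v *)
From mathcomp Require Import all_boot all_order all_fingroup.
Set Implicit Arguments. Unset Strict Implicit. Unset Printing Implicit Defensive.

Definition letter := option nat.
Notation Diamond := (@None nat).

Definition ints (f : seq letter) : seq nat := pmap id f.

Definition covers (n : nat) (f : seq letter) (pi : 'S_n) : Prop :=
  size f = n /\
  forall (i j : 'I_n) (a b : nat),
    nth Diamond f i = Some a -> nth Diamond f j = Some b ->
    (a < b) = (pi i < pi j).

(* factor of length n starting at (0-based) position i of a word *)
Definition wfactor (n : nat) (u : seq letter) (i : nat) : seq letter :=
  take n (drop i u).

(* cyclic factor of length n starting at (0-based) position i *)
Definition cfactor (n : nat) (u : seq letter) (i : nat) : seq letter :=
  [seq nth Diamond u ((i + j) %% size u) | j <- iota 0 n].

Definition pos_letters (u : seq letter) : Prop :=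
  forall k, Some k \in u -> 0 < k.

Definition is_upword (n : nat) (u : seq letter) : Prop :=
  [/\ n <= size u, pos_letters u, Diamond \in u,
      forall i, i < size u - n + 1 -> uniq (ints (wfactor n u i)) &
      forall pi : 'S_n,
        exists! i, i < size u - n + 1 /\ covers (wfactor n u i) pi].

Definition is_upcycle (n : nat) (u : seq letter) : Prop :=
  [/\ n <= size u, pos_letters u, Diamond \in u,
      forall i, i < size u -> uniq (ints (cfactor n u i)) &
      forall pi : 'S_n,
        exists! i, i < size u /\ covers (cfactor n u i) pi].

(* Main.v *)
Require Import Defs.
From mathcomp Require Import all_boot all_order all_fingroup.
From Stdlib Require Import Classical.
Set Implicit Arguments. Unset Strict Implicit. Unset Printing Implicit Defensive.

Section Realize.
Variable m : nat.
Variable s : nat -> nat.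
Hypothesis sinj : forall y z, y < m -> z < m -> s y = s z -> y = z.

Definition rk (y : 'I_m) := #|[pred z : 'I_m | s z < s y]|.

Lemma rk_lt (y : 'I_m) : rk y < m.
Proof.
rewrite /rk -[m in _ < m]card_ord; apply: proper_card; apply/properP; split.
  by apply/subsetP.
by exists y; rewrite // inE ltnn.
Qed.

Lemma rk_mono (y z : 'I_m) : s y < s z -> rk y < rk z.
Proof.
move=> lt; apply: proper_card; apply/properP; split.
  by apply/subsetP=> w; rewrite !inE => /ltn_trans; apply.
by exists y; rewrite !inE ?lt ?ltnn.
Qed.

Lemma rk_rel (y z : 'I_m) : (rk y < rk z) = (s y < s z).
Proof.
case: (ltnP (s y) (s z)) => h; first by rewrite rk_mono.
case: (eqVneq y z) => [->|ne]; first by rewrite ltnn.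
have : s z < s y.
  rewrite ltn_neqAle h andbT; apply/negP => /eqP e.
  have e2 : z = y by apply: val_inj; exact: (sinj (ltn_ord z) (ltn_ord y) e).
  by move: ne; rewrite e2 eqxx.
by move/rk_mono => h2; apply/negbTE; rewrite -leqNgt ltnW.
Qed.

Definition rkf (y : 'I_m) : 'I_m := Ordinal (rk_lt y).

Lemma rkf_inj : injective rkf.
Proof.
move=> y z e.
have e' : rk y = rk z by have := congr1 val e.
apply: val_inj; apply: (sinj (ltn_ord y) (ltn_ord z)).
case: (ltngtP (s y) (s z)) => // h.
- by move: h; rewrite -rk_rel e' ltnn.
- by move: h; rewrite -rk_rel e' ltnn.
Qed.

Lemma realize : exists pi : 'S_m, forall y z : 'I_m, (pi y < pi z) = (s y < s z).
Proof.
exists (perm rkf_inj) => y z; rewrite !permE; exact: rk_rel.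
Qed.
End Realize.
From mathcomp Require Import zify.

Definition covn (n : nat) (f : nat -> letter) (s : nat -> nat) : Prop :=
  forall y z a b, y < n -> z < n -> f y = Some a -> f z = Some b -> (a < b) = (s y < s z).

Definition injn (n : nat) (s : nat -> nat) : Prop :=
  forall y z, y < n -> z < n -> s y = s z -> y = z.

Definition cov (n : nat) (f : nat -> letter) (pi : 'S_n) : Prop :=
  forall (y z : 'I_n) a b, f y = Some a -> f z = Some b -> (a < b) = (pi y < pi z).

Lemma cov_iff n f (pi : 'S_n) (s : nat -> nat) :
  (forall y z : 'I_n, (pi y < pi z) = (s y < s z)) -> (cov f pi <-> covn n f s).
Proof.
move=> H; split.
  move=> C y z a b hy hz fa fb.
  by rewrite (C (Ordinal hy) (Ordinal hz) a b fa fb) H.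
by move=> C y z a b fa fb; rewrite H; apply: C.
Qed.

Definition Huniq n M (L : nat -> nat -> letter) : Prop :=
  forall i t1 t2 a, i < M -> t1 < n -> t2 < n -> L i t1 = Some a -> L i t2 = Some a -> t1 = t2.
Definition HcovS n M (L : nat -> nat -> letter) : Prop :=
  forall s, injn n s -> exists2 j, j < M & covn n (L j) s.
Definition HoneS n M (L : nat -> nat -> letter) : Prop :=
  forall s i j, injn n s -> i < M -> j < M -> covn n (L i) s -> covn n (L j) s -> i = j.

Lemma HcovS_of n M L :
  (forall pi : 'S_n, exists2 i, i < M & cov (L i) pi) -> HcovS n M L.
Proof.
move=> H s sinj; have [pi Hpi] := realize sinj.
by have [i hi ci] := H pi; exists i => //; rewrite -(cov_iff _ Hpi).
Qed.

Lemma HoneS_of n M L :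
  (forall (pi : 'S_n) i j, i < M -> j < M -> cov (L i) pi -> cov (L j) pi -> i = j) -> HoneS n M L.
Proof.
move=> H s i j sinj hi hj ci cj; have [pi Hpi] := realize sinj.
by apply: (H pi) => //; rewrite (cov_iff _ Hpi).
Qed.

Lemma covn_rev n' f s :
  covn n'.+1 (fun t => f (n' - t)) s <-> covn n'.+1 f (fun t => s (n' - t)).
Proof.
split=> C y z a b hy hz fa fb.
  have e1 : n' - (n' - y) = y by lia.
  have e2 : n' - (n' - z) = z by lia.
  rewrite -e1 -e2 in fa fb.
  rewrite (C (n' - y) (n' - z) a b) //; lia.
by rewrite (C (n' - y) (n' - z) a b) //; try lia; congr (s _ < s _); lia.
Qed.

Lemma injn_rev n' s : injn n'.+1 s -> injn n'.+1 (fun t => s (n' - t)).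
Proof. move=> I y z hy hz /I; lia. Qed.

Section Rev.
Variables (n' M : nat) (L : nat -> nat -> letter).
Definition Lr i t := L (M.-1 - i) (n' - t).

Lemma Huniq_rev : Huniq n'.+1 M L -> Huniq n'.+1 M Lr.
Proof.
move=> H i t1 t2 a hi h1 h2 e1 e2.
have := H _ _ _ _ _ _ _ e1 e2; lia.
Qed.

Lemma HcovS_rev : HcovS n'.+1 M L -> HcovS n'.+1 M Lr.
Proof.
move=> H s sinj.
have [j hj cj] := H _ (injn_rev sinj).
exists (M.-1 - j); first lia.
rewrite /Lr; have -> : M.-1 - (M.-1 - j) = j by lia.
exact: (proj2 (covn_rev n' (L j) s)).
Qed.

Lemma HoneS_rev : HoneS n'.+1 M L -> HoneS n'.+1 M Lr.
Proof.
move=> H s i j sinj hi hj ci cj.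
have := H _ (M.-1 - i) (M.-1 - j) (injn_rev sinj).
move: ci cj; rewrite /Lr => /(covn_rev n') ci /(covn_rev n') cj.
move=> /(_ ltac:(lia) ltac:(lia) ci cj); lia.
Qed.
End Rev.
Unset Implicit Arguments.

Definition val0 (o : letter) := if o is Some c then c else 0.
Fixpoint bnd (f : nat -> letter) m := if m is m'.+1 then maxn (val0 (f m')) (bnd f m') else 0.

Lemma bnd_ge f m t c : t < m -> f t = Some c -> c <= bnd f m.
Proof.
elim: m => [//|m IH] /=; rewrite ltnS leq_eqVlt => /orP [/eqP -> ->|/IH h] /=.
  exact: leq_maxl.
by move=> /h; move/leq_trans; apply; exact: leq_maxr.
Qed.

Definition funiq n (f : nat -> letter) : Prop :=
  forall t1 t2 a, t1 < n -> t2 < n -> f t1 = Some a -> f t2 = Some a -> t1 = t2.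

Section Base.
Variable n : nat.
Variable f : nat -> letter.
Definition base (hi : bool) t :=
  if f t is Some c then 2 * (c + n + 1) else if hi then (2 * (bnd f n + n + 2 + t)).+1 else (2 * t).+1.
Definition BIG := 2 * (bnd f n + 3 * n + 2).
Definition rs hi p x t := if t == p then x else base hi t.

Hypothesis fu : funiq n f.

Lemma base_lt_BIG hi t : t < n -> base hi t < BIG.
Proof.
rewrite /base /BIG => ht; case e: (f t) => [c|].
  have := bnd_ge _ _ _ _ ht e; lia.
case: hi; lia.
Qed.

Lemma base_pos hi t : 0 < base hi t.
Proof. rewrite /base; case: (f t) => [c|]; case: hi; lia. Qed.

Lemma base_inj hi : injn n (base hi).
Proof.
move=> y z hy hz; rewrite /base.
case ey: (f y) => [a|]; case ez: (f z) => [b|]; case: hi; try lia.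
- move=> h; have eab : a = b by lia.
  by subst b; exact: (fu y z a hy hz ey ez).
- move=> h; have eab : a = b by lia.
  by subst b; exact: (fu y z a hy hz ey ez).
Qed.

Lemma rs_inj hi p x : (forall t, t < n -> t != p -> x != base hi t) -> injn n (rs hi p x).
Proof.
move=> hx y z hy hz; rewrite /rs.
case: (eqVneq y p) => [->|nyp]; case: (eqVneq z p) => [->|nzp] //.
- by move=> e; have := hx z hz nzp; rewrite e eqxx.
- by move=> e; have := hx y hy nyp; rewrite e eqxx.
- exact: base_inj.
Qed.

Lemma base_rel hi y z a b : f y = Some a -> f z = Some b -> (a < b) = (base hi y < base hi z).
Proof. rewrite /base => -> ->; apply/idP/idP; lia. Qed.

Lemma rs_rel hi p x y z a b : y != p -> z != p -> f y = Some a -> f z = Some b ->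
  (a < b) = (rs hi p x y < rs hi p x z).
Proof. rewrite /rs => /negbTE -> /negbTE ->; exact: base_rel. Qed.

Lemma base_int hi t c : f t = Some c -> base hi t = 2 * (c + n + 1).
Proof. by rewrite /base => ->. Qed.
Lemma base_dia hi t : f t = None -> base hi t = if hi then (2 * (bnd f n + n + 2 + t)).+1 else (2 * t).+1.
Proof. by rewrite /base => ->. Qed.
Lemma rs_p hi p x : rs hi p x p = x.
Proof. by rewrite /rs eqxx. Qed.
Lemma rs_np hi p x t : t != p -> rs hi p x t = base hi t.
Proof. by rewrite /rs => /negbTE ->. Qed.
End Base.

Lemma covn_half n f s :
  funiq n f -> injn n s ->
  (forall y z a b, y < n -> z < n -> y < z -> f y = Some a -> f z = Some b -> (a < b) = (s y < s z)) ->
  covn n f s.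
Proof.
move=> fu si H y z a b hy hz fa fb.
case: (ltngtP y z) => [lt|gt|eq]; first exact: H.
- have ab : a != b by apply/eqP => e; subst b; have := fu _ _ _ hy hz fa fb; lia.
  have sab : s y != s z by apply/eqP => /si; lia.
  have := H z y b a hz hy gt fb fa.
  move: ab sab; rewrite !neq_ltn => /orP [] h1 /orP [] h2; rewrite ?h1 ?h2; lia.
- by subst z; rewrite fa in fb; case: fb => ->; rewrite !ltnn.
Qed.

Fixpoint mlow (low : nat -> bool) (s : nat -> nat) m :=
  if m is m'.+1 then maxn (if low m' then (s m').+1 else 0) (mlow low s m') else 0.

Lemma mlow_ge (low : nat -> bool) s m t : t < m -> low t -> (s t).+1 <= mlow low s m.
Proof.
elim: m => [//|m IH] /=; rewrite ltnS leq_eqVlt => /orP [/eqP -> ->|/IH h] /=.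
  exact: leq_maxl.
by move=> /h; move/leq_trans; apply; exact: leq_maxr.
Qed.

Lemma mlow_le (low : nat -> bool) s m v : (forall t, t < m -> low t -> (s t).+1 <= v) -> mlow low s m <= v.
Proof.
elim: m => [//|m IH] /= H; rewrite geq_max; apply/andP; split.
  by case e: (low m) => //; apply: H.
by apply: IH => t ht; apply: H; lia.
Qed.

Section Core.
Variables (n' M : nat) (L : nat -> nat -> letter).
Hypotheses (HU : Huniq n'.+1 M L) (HC : HcovS n'.+1 M L) (HO : HoneS n'.+1 M L).
Local Notation n := n'.+1.

Definition covpre f s := forall y z a b, y < n' -> z < n' -> f y = Some a -> f z = Some b -> (a < b) = (s y < s z).

Lemma fu_of i : i < M -> funiq n (L i).
Proof. by move=> hi t1 t2 a; apply: HU. Qed.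

Lemma core_a k k' (hk : k < M) (hk' : k' < M) (kk : k != k') (Lk0 : L k 0 = None)
  (Hsh : forall t, t < n' -> L k' t = L k t.+1) :
  exists t0 c0, t0 < n' /\ L k' t0 = Some c0.
Proof.
apply: NNPP => H.
have noint : forall t c, t < n' -> L k' t <> Some c by move=> t c ht e; apply: H; exists t, c.
set s := base n (L k') false.
have si : injn n s := base_inj _ _ (fu_of _ hk') false.
have c1 : covn n (L k') s by move=> y z a b _ _; apply: base_rel.
have c2 : covn n (L k) s.
  move=> [|y] z a b hy hz; first by rewrite Lk0.
  by rewrite -Hsh // => /noint.
have := HO _ _ _ si hk hk' c2 c1; by move/eqP: kk.
Qed.

Lemma core_b k k' j0 (hk : k < M) (Lk0 : L k 0 = None)
  (Hsh : forall t, t < n' -> L k' t = L k t.+1)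
  (Hpred : forall j, j < M -> j != j0 -> exists p,
  [/\ p < M, (forall t, t < n' -> L j t = L p t.+1) & (p = k -> j = k')])
  s : injn n s -> covpre (L k') s -> ~ covn n (L k') s ->
  forall j, j < M -> covn n (L j) s -> j = j0.
Proof.
move=> si cp ncv j hj cj; apply: NNPP => nj.
have [p [hp Lp Hpk]] := Hpred j hj (introN eqP nj).
pose low t := match L j t, L p 0 with Some c, Some e => c < e | _, _ => false end.
pose x := (2 * mlow low s n').+1.
pose s2 t := if t is t'.+1 then 2 * s t' + 2 else x.
have si2 : injn n s2.
  move=> [|y] [|z] hy hz //=; try lia.
  move=> e; have : s y = s z by lia.
  by move/si => -> //; lia.
have ck : covn n (L k) s2.
  move=> [|y] [|z] a b hy hz; rewrite ?Lk0 //.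
  rewrite -!Hsh; try lia.
  move=> fa fb; rewrite (cp y z a b) //=; try lia.
have cpp : covn n (L p) s2.
  move=> [|y] [|z] a b hy hz.
  - by move=> -> [->]; rewrite !ltnn.
  - rewrite -Lp; last lia.
    move=> fe fc /=.
    have ec : a != b.
      apply/eqP => e; subst b.
      have e2 := Lp z ltac:(lia); rewrite fc in e2.
      by have := fu_of p hp 0 z.+1 a (ltn0Sn _) hz fe (esym e2).
    case: (ltngtP a b) => h.
    + have : mlow low s n' <= s z.
        apply: mlow_le => t ht; rewrite /low.
        case ej: (L j t) => [c'|] //; rewrite fe => hc'.
        have := cj t z c' b ltac:(lia) ltac:(lia) ej fc.
        by rewrite (ltn_trans hc' h) => /esym.
      rewrite /x; lia.
    + have hl : low z by rewrite /low fc fe.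
      have := mlow_ge low s n' z ltac:(lia) hl.
      rewrite /x; lia.
    + by rewrite h eqxx in ec.
  - rewrite -Lp; last lia.
    move=> fc fe /=.
    have ec : a != b.
      apply/eqP => e; subst b.
      have e2 := Lp y ltac:(lia); rewrite fc in e2.
      by have := fu_of p hp 0 y.+1 a (ltn0Sn _) hy fe (esym e2).
    case: (ltngtP a b) => h.
    + have hl : low y by rewrite /low fc fe.
      have := mlow_ge low s n' y ltac:(lia) hl.
      rewrite /x; lia.
    + have : mlow low s n' <= s y.
        apply: mlow_le => t ht; rewrite /low.
        case ej: (L j t) => [c'|] //; rewrite fe => hc'.
        have := cj t y c' a ltac:(lia) ltac:(lia) ej fc.
        by rewrite (ltn_trans hc' h) => /esym.
      rewrite /x; lia.
    + by rewrite h eqxx in ec.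
  - rewrite -!Lp; try lia.
    move=> fa fb /=; rewrite (cj y z a b) //; try lia.
have := HO _ _ _ si2 hp hk cpp ck => /Hpk ejk.
by apply: ncv; rewrite -ejk.
Qed.

Lemma modS_pred j : j < M -> ((j + M.-1) %% M).+1 %% M = j.
Proof.
move=> hj; have M0 : 0 < M by lia.
rewrite -addn1 modnDml -addnA addn1 prednK // modnDr modn_small //.
Qed.

Lemma cycle_fwd
  (Hcyc : forall i t, i < M -> t < n' -> L (i.+1 %% M) t = L i t.+1)
  k a : 1 < M -> k < M -> L k 0 = None -> L (k.+1 %% M) n' = Some a -> False.
Proof.
move=> M1 hk Lk0 La.
set k' := k.+1 %% M.
have hk' : k' < M by rewrite /k' ltn_pmod //; lia.
have kk : k != k'.
  rewrite /k'; case: (ltnP k.+1 M) => h.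
    by rewrite modn_small //; lia.
  have -> : k.+1 = M by lia.
  by rewrite modnn; lia.
have Hsh : forall t, t < n' -> L k' t = L k t.+1 by move=> t ht; exact: Hcyc.
have Hpred : forall j, j < M -> j != M -> exists p,
  [/\ p < M, (forall t, t < n' -> L j t = L p t.+1) & (p = k -> j = k')].
  move=> j hj _; exists ((j + M.-1) %% M); split.
  - by rewrite ltn_pmod //; lia.
  - by move=> t ht; rewrite -Hcyc ?modS_pred // ltn_pmod //; lia.
  - by move=> e; rewrite -(modS_pred j hj) e.
have [t0 [c0 [ht0 e0]]] := core_a k k' hk hk' kk Lk0 Hsh.
have ca : c0 != a.
  apply/eqP => e; subst c0.
  have := fu_of k' hk' t0 n' a ltac:(lia) ltac:(lia) e0 La; lia.
pose x := if a < c0 then BIG n (L k') else 0.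
pose s := rs n (L k') false n' x.
have si : injn n s.
  apply: rs_inj; first exact: fu_of.
  move=> t ht _; rewrite /x; case: ifP => _.
    by rewrite neq_ltn base_lt_BIG ?orbT.
  by rewrite neq_ltn base_pos.
have cp : covpre (L k') s.
  move=> y z c d hy hz; apply: rs_rel; apply/eqP; lia.
have ncv : ~ covn n (L k') s.
  move=> C; have := C t0 n' c0 a ltac:(lia) ltac:(lia) e0 La.
  rewrite /s rs_p rs_np; last by apply/eqP; lia.
  rewrite /x; case: ifP => h.
    have -> : (c0 < a) = false by apply/negbTE; rewrite -leqNgt ltnW.
    rewrite base_lt_BIG; [by [] | lia].
  have -> : c0 < a by move: ca; rewrite neq_ltn h orbF.
  by rewrite ltn0.
have [j hj cj] := HC s si.
have := core_b k k' M hk Lk0 Hsh Hpred s si cp ncv j hj cj; lia.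
Qed.

Lemma argext (f : nat -> letter) m (mx : bool) : (exists t c, t < m /\ f t = Some c) ->
  exists ts w, [/\ ts < m, f ts = Some w &
    forall t c, t < m -> f t = Some c -> if mx then c <= w else w <= c].
Proof.
elim: m => [[t [c [//]]]|m IH] H.
case: (classic (exists t c, t < m /\ f t = Some c)) => [/IH [ts [w [h1 h2 h3]]]|nH].
  clear IH; case e: (f m) => [c'|].
  - case: (boolP (if mx then w <= c' else c' <= w)) => hc.
    + exists m, c'; split => // t c ht ft.
      case: (ltnP t m) => htm.
        by have := h3 t c htm ft; clear h3; case: mx hc => ? ?; lia.
      have et : t = m by lia.
      by move: ft; rewrite et e => -[->]; clear h3; case: mx {hc}.
    + exists ts, w; split; [lia | done | ].
      move=> t c ht ft; case: (ltnP t m) => htm; first exact: (h3 t c htm ft).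
      have et : t = m by lia.
      by move: ft; rewrite et e => -[<-]; clear h3; case: mx hc => /=; lia.
  - exists ts, w; split; [lia | done | ].
    move=> t c ht ft; case: (ltnP t m) => htm; first exact: (h3 t c htm ft).
    have et : t = m by lia.
    by move: ft; rewrite et e.
clear IH; have [t [c [ht ft]]] := H.
have etm : t = m.
  case: (ltnP t m) => h; last lia.
  by case: nH; exists t, c.
subst t; exists m, c; split => // t c' ht' ft'.
case: (ltnP t m) => h.
  by case: nH; exists t, c'.
have et : t = m by lia.
by move: ft'; rewrite et ft => -[->]; case: mx.
Qed.

Section Word.
Hypothesis Hshift : forall i t, i.+1 < M -> t < n' -> L i.+1 t = L i t.+1.

Lemma FA k : k.+1 < M -> L k 0 = None -> forall s, injn n s -> covpre (L k.+1) s ->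
  ~ covn n (L k.+1) s -> covn n (L 0) s.
Proof.
move=> hk1 Lk0 s si cp ncv.
have Hsh : forall t, t < n' -> L k.+1 t = L k t.+1 by move=> t ht; exact: Hshift.
have Hpred : forall j, j < M -> j != 0 -> exists p,
  [/\ p < M, (forall t, t < n' -> L j t = L p t.+1) & (p = k -> j = k.+1)].
  move=> j hj nj; exists j.-1; split; first lia.
  - move=> t ht; rewrite -Hshift //; last lia.
    by rewrite prednK //; lia.
  - move=> e; lia.
have [j hj cj] := HC s si.
have ej := core_b k k.+1 0 ltac:(lia) Lk0 Hsh Hpred s si cp ncv j hj cj.
by rewrite -ej.
Qed.

Lemma rs_cp f hi x s : s = rs n f hi n' x -> covpre f s.
Proof. move=> -> y z c d hy hz; apply: rs_rel; apply/eqP; lia. Qed.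

Lemma orient k a : k.+1 < M -> L k 0 = None -> L k.+1 n' = Some a ->
  (forall t w, t < n' -> L k.+1 t = Some w -> w < a) \/
  (forall t w, t < n' -> L k.+1 t = Some w -> a < w).
Proof.
move=> hk1 Lk0 La.
set f := L k.+1.
have fuf : funiq n f := fu_of k.+1 hk1.
have fne : forall t w, t < n' -> f t = Some w -> w != a.
  by move=> t w ht ft; apply/eqP => e; subst w; have := fuf t n' a ltac:(lia) ltac:(lia) ft La; lia.
apply: NNPP => H.
have [t1 [w1 [ht1 [f1 h1]]]] : exists t w, t < n' /\ f t = Some w /\ a < w.
  apply: NNPP => H1; apply: H; left => t w ht ft.
  have := fne t w ht ft; rewrite neq_ltn => /orP [//|h].
  by case: H1; exists t, w.
have [t2 [w2 [ht2 [f2 h2]]]] : exists t w, t < n' /\ f t = Some w /\ w < a.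
  apply: NNPP => H1; apply: H; right => t w ht ft.
  have := fne t w ht ft; rewrite neq_ltn => /orP [h|//].
  by case: H1; exists t, w.
pose s0 := rs n f false n' 0.
pose sB := rs n f false n' (BIG n f).
have si0 : injn n s0.
  by apply: rs_inj => // t ht _; rewrite neq_ltn base_pos.
have siB : injn n sB.
  by apply: rs_inj => // t ht _; rewrite neq_ltn base_lt_BIG ?orbT.
have c0 : covn n (L 0) s0.
  apply: (FA k hk1 Lk0 s0 si0 (rs_cp _ _ _ _ erefl)) => C.
  have := C t2 n' w2 a ltac:(lia) ltac:(lia) f2 La.
  by rewrite h2 /s0 rs_p rs_np ?ltn0 //; apply/eqP; lia.
have cB : covn n (L 0) sB.
  apply: (FA k hk1 Lk0 sB siB (rs_cp _ _ _ _ erefl)) => C.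
  have := C t1 n' w1 a ltac:(lia) ltac:(lia) f1 La.
  rewrite /sB rs_p rs_np; last by apply/eqP; lia.
  by rewrite base_lt_BIG; [rewrite ltnNge ltnW | lia].
pose sf := base n f false.
have sif : injn n sf := base_inj n f fuf false.
have cf : covn n f sf by move=> y z c d _ _; apply: base_rel.
have cg : covn n (L 0) sf.
  move=> y z c d hy hz gy gz.
  case: (eqVneq y n') => ey; case: (eqVneq z n') => ez.
  - by subst; rewrite gy in gz; case: gz => ->; rewrite !ltnn.
  - have := c0 y z c d hy hz gy gz; have := cB y z c d hy hz gy gz.
    rewrite /s0 /sB ey !rs_p !rs_np //.
    have := base_lt_BIG n f false z hz; have := base_pos n f false z; lia.
  - have := c0 y z c d hy hz gy gz; have := cB y z c d hy hz gy gz.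
    rewrite /s0 /sB ez !rs_p !rs_np //.
    have := base_lt_BIG n f false y hy; have := base_pos n f false y; lia.
  - have := c0 y z c d hy hz gy gz.
    by rewrite /s0 !rs_np.
have := HO sf 0 k.+1 sif ltac:(lia) hk1 cg cf; lia.
Qed.

Definition SLconc k := exists ts c b w, ts < n' /\ L 0 ts = Some c /\
  (forall t, t < n' -> t != ts -> L 0 t = None) /\ L 0 n' = Some b /\ L k.+1 ts = Some w /\
  (forall t w', t < n' -> t != ts -> L k.+1 t = Some w' -> (w' < w) = (b < c)).

Lemma SLA k a : k.+1 < M -> L k 0 = None -> L k.+1 n' = Some a ->
  (forall t w, t < n' -> L k.+1 t = Some w -> w < a) -> SLconc k.
Proof.
move=> hk1 Lk0 La Htop.
set f := L k.+1.
have Laf : f n' = Some a := La.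
have fuf : funiq n f := fu_of k.+1 hk1.
have fug : funiq n (L 0) := fu_of 0 ltac:(lia).
have Hsh : forall t, t < n' -> L k.+1 t = L k t.+1 by move=> t ht; exact: Hshift.
have [t0 [cc0 [ht0 e0]]] := core_a k k.+1 ltac:(lia) hk1 ltac:(by rewrite neq_ltn ltnSn) Lk0 Hsh.
have [ts [w [hts fts hmax]]] := argext f n' true (ex_intro _ t0 (ex_intro _ cc0 (conj ht0 e0))).
pose s0 := rs n f false n' 0.
pose sB := rs n f false n' (BIG n f).
pose xb := (2 * (w + n)).+1.
pose sb := rs n f false n' xb.
have si0 : injn n s0.
  by apply: rs_inj => // t ht _; rewrite neq_ltn base_pos.
have siB : injn n sB.
  by apply: rs_inj => // t ht _; rewrite neq_ltn base_lt_BIG ?orbT.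
have sib : injn n sb.
  apply: rs_inj => // t ht _; rewrite /base /xb; case: (f t) => [c|]; apply/eqP; lia.
have c0 : covn n (L 0) s0.
  apply: (FA k hk1 Lk0 s0 si0 (rs_cp _ _ _ _ erefl)) => C.
  have := C ts n' w a ltac:(lia) ltac:(lia) fts La.
  by rewrite (Htop ts w hts fts) /s0 rs_p rs_np ?ltn0 //; apply/eqP; lia.
have ncB : ~ covn n (L 0) sB.
  move=> CB.
  have cfB : covn n f sB.
    move=> y z c d hy hz fy fz.
    case: (eqVneq y n') => ey; case: (eqVneq z n') => ez.
    - by subst; rewrite fy in fz; case: fz => ->; rewrite !ltnn.
    - subst y; rewrite Laf in fy; case: fy => <-.
      have := Htop z d ltac:(lia) fz.
      rewrite /sB rs_p rs_np //; have := base_lt_BIG n f false z hz; lia.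
    - subst z; rewrite Laf in fz; case: fz => <-.
      have := Htop y c ltac:(lia) fy.
      rewrite /sB rs_p rs_np //; have := base_lt_BIG n f false y hy; lia.
    - by rewrite /sB !rs_np //; apply: base_rel.
  have := HO sB 0 k.+1 siB ltac:(lia) hk1 CB cfB; lia.
have cb : covn n (L 0) sb.
  apply: (FA k hk1 Lk0 sb sib (rs_cp _ _ _ _ erefl)) => C.
  have := C ts n' w a ltac:(lia) ltac:(lia) fts La.
  rewrite (Htop ts w hts fts) /sb rs_p rs_np; last by apply/eqP; lia.
  rewrite (base_int n f false ts w fts) /xb; lia.
have [b gb] : exists b, L 0 n' = Some b.
  case e: (L 0 n') => [b|]; first by exists b.
  exfalso; apply: ncB => y z c d hy hz gy gz.
  have ey : y != n' by apply/eqP => ey; rewrite ey e in gy.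
  have ez : z != n' by apply/eqP => ez; rewrite ez e in gz.
  by rewrite /sB !rs_np //; have := c0 y z c d hy hz gy gz; rewrite /s0 !rs_np.
have d2 : forall t c, t < n' -> L 0 t = Some c -> b < c.
  move=> t c ht gt; have := c0 n' t b c ltac:(lia) ltac:(lia) gb gt.
  by rewrite /s0 rs_p rs_np ?base_pos //; apply/eqP; lia.
have d3 : forall t c, t < n' -> L 0 t = Some c -> t = ts.
  move=> t c ht gt; have := cb n' t b c ltac:(lia) ltac:(lia) gb gt.
  rewrite (d2 t c ht gt) /sb rs_p rs_np; last by apply/eqP; lia.
  rewrite /base /xb; case ft: (f t) => [w'|]; last lia.
  have := hmax t w' ht ft => h1 h2.
  have ew : w' = w by lia.
  by subst w'; apply: (fuf t ts w) => //; lia.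
have [t1 [c1 [ht1 g1]]] : exists t c, t < n' /\ L 0 t = Some c.
  apply: NNPP => H; apply: ncB => y z c d hy hz gy gz.
  have ey : y = n'.
    case: (ltngtP y n') => // h; [by case: H; exists y, c | lia].
  have ez : z = n'.
    case: (ltngtP z n') => // h; [by case: H; exists z, d | lia].
  by subst; rewrite gy in gz; case: gz => ->; rewrite !ltnn.
have e1 := d3 t1 c1 ht1 g1; subst t1.
exists ts, c1, b, w; split; first done; split; first done; split.
  move=> t ht nt; case e: (L 0 t) => [c'|] //.
  by have := d3 t c' ht e; move/eqP: nt.
split; first done; split; first done.
move=> t w' ht nt ft.
rewrite (d2 ts c1 hts g1).
have := hmax t w' ht ft; rewrite leq_eqVlt => /orP [/eqP ew|->//].
by subst w'; have := fuf t ts w ltac:(lia) ltac:(lia) ft fts; move/eqP: nt.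
Qed.

Lemma SLB k a : k.+1 < M -> L k 0 = None -> L k.+1 n' = Some a ->
  (forall t w, t < n' -> L k.+1 t = Some w -> a < w) -> SLconc k.
Proof.
move=> hk1 Lk0 La Hbot.
set f := L k.+1.
have Laf : f n' = Some a := La.
have fuf : funiq n f := fu_of k.+1 hk1.
have Hsh : forall t, t < n' -> L k.+1 t = L k t.+1 by move=> t ht; exact: Hshift.
have [t0 [cc0 [ht0 e0]]] := core_a k k.+1 ltac:(lia) hk1 ltac:(by rewrite neq_ltn ltnSn) Lk0 Hsh.
have [ts [w [hts fts hmin]]] := argext f n' false (ex_intro _ t0 (ex_intro _ cc0 (conj ht0 e0))).
have hB : w <= bnd f n := bnd_ge f n ts w ltac:(lia) fts.
pose s0 := rs n f true n' 0.
pose sB := rs n f true n' (BIG n f).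
pose xa := (2 * (w + n + 1)).+1.
pose sa := rs n f true n' xa.
have si0 : injn n s0.
  by apply: rs_inj => // t ht _; rewrite neq_ltn base_pos.
have siB : injn n sB.
  by apply: rs_inj => // t ht _; rewrite neq_ltn base_lt_BIG ?orbT.
have sia : injn n sa.
  apply: rs_inj => // t ht _; rewrite /base /xa; case: (f t) => [c|]; apply/eqP; lia.
have nc0 : ~ covn n (L 0) s0.
  move=> C0.
  have cf0 : covn n f s0.
    move=> y z c d hy hz fy fz.
    case: (eqVneq y n') => ey; case: (eqVneq z n') => ez.
    - by subst; rewrite fy in fz; case: fz => ->; rewrite !ltnn.
    - subst y; rewrite Laf in fy; case: fy => <-.
      have := Hbot z d ltac:(lia) fz.
      rewrite /s0 rs_p rs_np //; have := base_pos n f true z; lia.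
    - subst z; rewrite Laf in fz; case: fz => <-.
      have := Hbot y c ltac:(lia) fy.
      rewrite /s0 rs_p rs_np //; have := base_pos n f true y; lia.
    - by rewrite /s0 !rs_np //; apply: base_rel.
  have := HO s0 0 k.+1 si0 ltac:(lia) hk1 C0 cf0; lia.
have cB : covn n (L 0) sB.
  apply: (FA k hk1 Lk0 sB siB (rs_cp _ _ _ _ erefl)) => C.
  have := C n' ts a w ltac:(lia) ltac:(lia) La fts.
  rewrite (Hbot ts w hts fts) /sB rs_p rs_np; last by apply/eqP; lia.
  have := base_lt_BIG n f true ts ltac:(lia); lia.
have ca : covn n (L 0) sa.
  apply: (FA k hk1 Lk0 sa sia (rs_cp _ _ _ _ erefl)) => C.
  have := C n' ts a w ltac:(lia) ltac:(lia) La fts.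
  rewrite (Hbot ts w hts fts) /sa rs_p rs_np; last by apply/eqP; lia.
  rewrite (base_int n f true ts w fts) /xa; lia.
have [b gb] : exists b, L 0 n' = Some b.
  case e: (L 0 n') => [b|]; first by exists b.
  exfalso; apply: nc0 => y z c d hy hz gy gz.
  have ey : y != n' by apply/eqP => ey; rewrite ey e in gy.
  have ez : z != n' by apply/eqP => ez; rewrite ez e in gz.
  by rewrite /s0 !rs_np //; have := cB y z c d hy hz gy gz; rewrite /sB !rs_np.
have d2 : forall t c, t < n' -> L 0 t = Some c -> c < b.
  move=> t c ht gt; have := cB t n' c b ltac:(lia) ltac:(lia) gt gb.
  rewrite /sB rs_p rs_np; last by apply/eqP; lia.
  by rewrite base_lt_BIG //; lia.
have d3 : forall t c, t < n' -> L 0 t = Some c -> t = ts.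
  move=> t c ht gt; have := ca t n' c b ltac:(lia) ltac:(lia) gt gb.
  rewrite (d2 t c ht gt) /sa rs_p rs_np; last by apply/eqP; lia.
  rewrite /base /xa; case ft: (f t) => [w'|]; last lia.
  have := hmin t w' ht ft => h1 h2.
  have ew : w' = w by lia.
  by subst w'; apply: (fuf t ts w) => //; lia.
have [t1 [c1 [ht1 g1]]] : exists t c, t < n' /\ L 0 t = Some c.
  apply: NNPP => H; apply: nc0 => y z c d hy hz gy gz.
  have ey : y = n'.
    case: (ltngtP y n') => // h; [by case: H; exists y, c | lia].
  have ez : z = n'.
    case: (ltngtP z n') => // h; [by case: H; exists z, d | lia].
  by subst; rewrite gy in gz; case: gz => ->; rewrite !ltnn.
have e1 := d3 t1 c1 ht1 g1; subst t1.
exists ts, c1, b, w; split; first done; split; first done; split.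
  move=> t ht nt; case e: (L 0 t) => [c'|] //.
  by have := d3 t c' ht e; move/eqP: nt.
split; first done; split; first done.
move=> t w' ht nt ft.
have := d2 ts c1 hts g1; have := hmin t w' ht ft; lia.
Qed.

Lemma SL k a : k.+1 < M -> L k 0 = None -> L k.+1 n' = Some a -> SLconc k.
Proof.
move=> hk1 Lk0 La.
case: (orient k a hk1 Lk0 La) => H; [exact: SLA H | exact: SLB H].
Qed.

Lemma word_fwd k : 1 < n' -> k.+1 < M -> L k 0 = None -> L k.+1 n' = None.
Proof.
move=> n2 hk1 Lk0; case La: (L k.+1 n') => [a|] //; exfalso.
have [ts [c [b [w [hts [g0 [gnone [gb [fw hrel]]]]]]]]] := SL k a hk1 Lk0 La.
have h1M : 1 < M by lia.
have fug : funiq n (L 0) := fu_of 0 ltac:(lia).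
have fu1 : funiq n (L 1) := fu_of 1 h1M.
have cb : c != b by apply/eqP => e; subst; have := fug ts n' b ltac:(lia) ltac:(lia) g0 gb; lia.
have L1 : forall t, t < n' -> L 1 t = L 0 t.+1 := fun t ht => Hshift 0 t h1M ht.
have g0pos : forall t d, t < n -> L 0 t = Some d -> t = ts \/ t = n'.
  move=> t d ht gt; case: (eqVneq t ts) => [->|nt]; first by left.
  case: (ltngtP t n') => h; [by rewrite gnone in gt | lia | by right].
case: (posnP ts) => [ts0 | tsp].
- subst ts.
  have L10 : L 1 0 = None by rewrite L1 ?gnone //; lia.
  pose x := if b < c then BIG n (L 1) else 0.
  pose s := rs n (L 1) false 0 x.
  have si : injn n s.
    apply: rs_inj => // t ht _; rewrite /x; case: ifP => _.
      by rewrite neq_ltn base_lt_BIG ?orbT.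
    by rewrite neq_ltn base_pos.
  have c1 : covn n (L 1) s.
    move=> y z al be hy hz fy fz.
    have ny : y != 0 by apply/eqP => ey; rewrite ey L10 in fy.
    have nz : z != 0 by apply/eqP => ez; rewrite ez L10 in fz.
    exact: (rs_rel n (L 1) false 0 x y z al be ny nz fy fz).
  have c0 : covn n (L 0) s.
    apply: covn_half fug si _ => y z al be hy hz yz gy gz.
    have [ey|ey] := g0pos y al hy gy; have [ez|ez] := g0pos z be hz gz; subst; try lia.
    rewrite g0 in gy; rewrite gb in gz; case: gy => <-; case: gz => <-.
    rewrite /s rs_p rs_np; last by apply/eqP; lia.
    rewrite /x; case: ifP => h.
      have := base_lt_BIG n (L 1) false n' ltac:(lia); lia.
    have := base_pos n (L 1) false n'; move: cb; rewrite neq_ltn h orbF => ->; lia.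
  have := HO s 0 1 si ltac:(lia) h1M c0 c1; lia.
- have L00 : L 0 0 = None by apply: gnone; lia.
  case e1: (L 1 n') => [e'|].
  + have [ts2 [c2 [b2 [w2 [hts2 [g02 [gnone2 [gb2 [fw2 hrel2]]]]]]]]] := SL 0 e' h1M L00 e1.
    have ets : ts2 = ts.
      by case: (eqVneq ts2 ts) => // nt; rewrite gnone in g02.
    subst ts2; rewrite g0 in g02; case: g02 => ec; subst c2.
    rewrite gb in gb2; case: gb2 => eb; subst b2.
    have ets : ts.+1 = n'.
      case: (ltngtP ts.+1 n') => h; [|lia|done].
      by rewrite L1 // gnone // in fw2; lia.
    rewrite L1 // ets gb in fw2; case: fw2 => ew; subst w2.
    have := hrel2 ts.-1 c ltac:(lia) ltac:(apply/eqP; lia).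
    rewrite L1; last lia.
    rewrite prednK // => /(_ g0).
    move: cb; rewrite neq_ltn => /orP [] h; rewrite h; lia.
  + pose s := fun t => if b < c then n - t else t.
    have si : injn n s by move=> y z hy hz; rewrite /s; case: ifP => _; lia.
    have smono : forall y z, y < z -> z < n -> (c < b) = (s y < s z).
      move=> y z yz hz; rewrite /s; case: ifP => h.
        have -> : (c < b) = false by apply/negbTE; rewrite -leqNgt ltnW.
        lia.
      by move: cb; rewrite neq_ltn h orbF => ->; lia.
    have c0 : covn n (L 0) s.
      apply: covn_half fug si _ => y z al be hy hz yz gy gz.
      have [ey|ey] := g0pos y al hy gy; have [ez|ez] := g0pos z be hz gz; subst; try lia.
      rewrite g0 in gy; rewrite gb in gz; case: gy => <-; case: gz => <-.
      exact: smono.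
    have c1 : covn n (L 1) s.
      apply: covn_half fu1 si _ => y z al be hy hz yz gy gz.
      have hz' : z < n'.
        by case: (ltngtP z n') => h //; [lia | rewrite h e1 in gz].
      rewrite L1 in gy; last lia.
      rewrite L1 in gz; last lia.
      have [ey|ey] := g0pos y.+1 al ltac:(lia) gy; have [ez|ez] := g0pos z.+1 be ltac:(lia) gz; try lia.
      rewrite ey g0 in gy; rewrite ez gb in gz; case: gy => <-; case: gz => <-.
      exact: smono.
    have := HO s 0 1 si ltac:(lia) h1M c0 c1; lia.
Qed.
End Word.
End Core.

Lemma shift_rev n' M L :
  (forall i t, i.+1 < M -> t < n' -> L i.+1 t = L i t.+1) ->
  (forall i t, i.+1 < M -> t < n' -> Lr n' M L i.+1 t = Lr n' M L i t.+1).
Proof.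
move=> H i t hi ht; rewrite /Lr.
have e1 : M.-1 - i = (M.-1 - i.+1).+1 by lia.
have e2 : n' - t = (n' - t.+1).+1 by lia.
rewrite e1 e2 H //; lia.
Qed.

Lemma cyc_rev n' M L : 0 < M ->
  (forall i t, i < M -> t < n' -> L (i.+1 %% M) t = L i t.+1) ->
  (forall i t, i < M -> t < n' -> Lr n' M L (i.+1 %% M) t = Lr n' M L i t.+1).
Proof.
move=> M0 H i t hi ht; rewrite /Lr.
have e2 : n' - t = (n' - t.+1).+1 by lia.
case: (ltnP i.+1 M) => h.
  rewrite (modn_small h).
  have e1 : M.-1 - i = (M.-1 - i.+1).+1 by lia.
  rewrite e1 e2 -H; last lia; last lia.
  by rewrite modn_small //; lia.
have ei : i = M.-1 by lia.
rewrite ei prednK // modnn subn0 subnn e2 -H; last lia; last lia.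
by rewrite prednK // modnn.
Qed.

Lemma word_bwd n' M L (HU : Huniq n'.+1 M L) (HC : HcovS n'.+1 M L) (HO : HoneS n'.+1 M L)
  (Hsh : forall i t, i.+1 < M -> t < n' -> L i.+1 t = L i t.+1) i :
  1 < n' -> i.+1 < M -> L i.+1 n' = None -> L i 0 = None.
Proof.
move=> n2 hi e.
have := word_fwd n' M (Lr n' M L) (Huniq_rev HU) (HcovS_rev HC) (HoneS_rev HO) (shift_rev n' M L Hsh)
  (M.-1 - i.+1) n2 ltac:(lia).
rewrite /Lr.
have e1 : M.-1 - (M.-1 - i.+1) = i.+1 by lia.
have e2 : M.-1 - (M.-1 - i.+1).+1 = i by lia.
by rewrite e1 e2 subn0 subnn => /(_ e).
Qed.

Lemma cycle_fwd' n' M L (HU : Huniq n'.+1 M L) (HC : HcovS n'.+1 M L) (HO : HoneS n'.+1 M L)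
  (Hcyc : forall i t, i < M -> t < n' -> L (i.+1 %% M) t = L i t.+1) k :
  1 < M -> k < M -> L k 0 = None -> L (k.+1 %% M) n' = None.
Proof.
move=> M1 hk e; case e2: (L (k.+1 %% M) n') => [a|] //.
by have := cycle_fwd n' M L HU HC HO Hcyc k a M1 hk e e2.
Qed.

Lemma cycle_bwd n' M L (HU : Huniq n'.+1 M L) (HC : HcovS n'.+1 M L) (HO : HoneS n'.+1 M L)
  (Hcyc : forall i t, i < M -> t < n' -> L (i.+1 %% M) t = L i t.+1) i :
  1 < M -> i < M -> L (i.+1 %% M) n' = None -> L i 0 = None.
Proof.
move=> M1 hi e.
have hm : i.+1 %% M < M by rewrite ltn_pmod //; lia.
have := cycle_fwd' n' M (Lr n' M L) (Huniq_rev HU) (HcovS_rev HC) (HoneS_rev HO)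
  (cyc_rev n' M L ltac:(lia) Hcyc) (M.-1 - i.+1 %% M) M1 ltac:(lia).
rewrite /Lr.
have e1 : M.-1 - (M.-1 - i.+1 %% M) = i.+1 %% M by lia.
rewrite e1 subn0 subnn => /(_ e).
case: (ltnP i.+1 M) => h.
  rewrite (modn_small h).
  have -> : (M.-1 - i.+1).+1 = M.-1 - i by lia.
  rewrite modn_small; last lia.
  by have -> : M.-1 - (M.-1 - i) = i by lia.
have ei : i.+1 = M by lia.
rewrite ei modnn subn0 prednK; last lia.
rewrite modnn subn0.
by have -> : M.-1 = i by lia.
Qed.

Lemma uniq_ints_nth (f : seq letter) t1 t2 a : uniq (ints f) -> t1 < size f -> t2 < size f ->
  nth Diamond f t1 = Some a -> nth Diamond f t2 = Some a -> t1 = t2.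
Proof.
elim: f t1 t2 => [|x f IH] t1 t2 //=.
rewrite /ints /=.
have memf : forall t, t < size f -> nth Diamond f t = Some a -> a \in pmap id f.
  by move=> t ht e; rewrite mem_pmap map_id -e mem_nth.
case: t1 => [|t1]; case: t2 => [|t2] //= U h1 h2.
- move=> ex e; subst x; move: U => /= /andP [na _].
  by move: na; rewrite (memf t2) //.
- move=> e ex; subst x; move: U => /= /andP [na _].
  by move: na; rewrite (memf t1) //.
- move=> e1 e2; congr S; apply: (IH t1 t2) => //.
  move: U; case: x => [y|] //= /andP [] //.
Qed.

Lemma covers_cov n (f : seq letter) (g : nat -> letter) (pi : 'S_n) :
  size f = n -> (forall t, t < n -> nth Diamond f t = g t) -> (covers f pi <-> cov g pi).
Proof.
move=> sf H; split.
  case=> _ C y z a b ga gb; apply: C; by rewrite H.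
move=> C; split => // y z a b fa fb; apply: C; by rewrite -H.
Qed.

Theorem lemma5 (n : nat) (u : seq letter) : 3 <= n ->
  (is_upword n u ->
     forall k, k < size u -> nth Diamond u k = Diamond ->
       (k + n < size u -> nth Diamond u (k + n) = Diamond) /\
       (n <= k -> nth Diamond u (k - n) = Diamond)) /\
  (is_upcycle n u ->
     forall k, k < size u -> nth Diamond u k = Diamond ->
       nth Diamond u ((k + n) %% size u) = Diamond /\
       nth Diamond u ((k + size u - n) %% size u) = Diamond).
Proof.
case: n => [//|n'] hn.
have n2 : 1 < n' by lia.
split.
- case=> hN _ _ hu hc k hk hk0.
  pose M := size u - n'.+1 + 1.
  pose L i t := nth Diamond u (i + t).
  have wfs : forall i, i < M -> size (wfactor n'.+1 u i) = n'.+1.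
    move=> i hi; rewrite /wfactor size_take size_drop; case: ifP => //; lia.
  have wfn : forall i t, i < M -> t < n'.+1 -> nth Diamond (wfactor n'.+1 u i) t = L i t.
    by move=> i t hi ht; rewrite /wfactor nth_take // nth_drop.
  have HU : Huniq n'.+1 M L.
    move=> i t1 t2 a hi h1 h2 e1 e2.
    apply: (uniq_ints_nth (wfactor n'.+1 u i) t1 t2 a (hu i hi)); rewrite ?wfs ?wfn //.
  have HC : HcovS n'.+1 M L.
    apply: HcovS_of => pi; have [i [[hi ci] _]] := hc pi.
    by exists i => //; apply/(covers_cov _ _ _ _ (wfs i hi) (wfn i ^~ hi)).
  have HO : HoneS n'.+1 M L.
    apply: HoneS_of => pi i j hi hj ci cj; have [x [_ ux]] := hc pi.
    have <- := ux i (conj hi (proj2 (covers_cov _ _ _ _ (wfs i hi) (wfn i ^~ hi)) ci)).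
    by have <- := ux j (conj hj (proj2 (covers_cov _ _ _ _ (wfs j hj) (wfn j ^~ hj)) cj)).
  have Hsh : forall i t, i.+1 < M -> t < n' -> L i.+1 t = L i t.+1.
    by move=> i t _ _; rewrite /L addSnnS.
  split.
  + move=> hkn.
    have := word_fwd n' M L HU HC HO Hsh k n2 ltac:(lia).
    by rewrite /L addn0 hk0 addSnnS => /(_ erefl).
  + move=> hnk.
    have := word_bwd n' M L HU HC HO Hsh (k - n'.+1) n2 ltac:(lia).
    rewrite /L addn0.
    have -> : (k - n'.+1).+1 + n' = k by lia.
    by move=> /(_ hk0).
- case=> hN _ _ hu hc k hk hk0.
  pose M := size u.
  pose L i t := nth Diamond u ((i + t) %% M).
  have cfs : forall i, size (cfactor n'.+1 u i) = n'.+1.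
    by move=> i; rewrite /cfactor size_map size_iota.
  have cfn : forall i t, t < n'.+1 -> nth Diamond (cfactor n'.+1 u i) t = L i t.
    by move=> i t ht; rewrite /cfactor (nth_map 0) ?size_iota // nth_iota.
  have HU : Huniq n'.+1 M L.
    move=> i t1 t2 a hi h1 h2 e1 e2.
    apply: (uniq_ints_nth (cfactor n'.+1 u i) t1 t2 a (hu i hi)); rewrite ?cfs ?cfn //.
  have HC : HcovS n'.+1 M L.
    apply: HcovS_of => pi; have [i [[hi ci] _]] := hc pi.
    by exists i => //; apply/(covers_cov _ _ _ _ (cfs i) (cfn i)).
  have HO : HoneS n'.+1 M L.
    apply: HoneS_of => pi i j hi hj ci cj; have [x [_ ux]] := hc pi.
    have <- := ux i (conj hi (proj2 (covers_cov _ _ _ _ (cfs i) (cfn i)) ci)).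
    by have <- := ux j (conj hj (proj2 (covers_cov _ _ _ _ (cfs j) (cfn j)) cj)).
  have Hcyc : forall i t, i < M -> t < n' -> L (i.+1 %% M) t = L i t.+1.
    by move=> i t _ _; rewrite /L modnDml addSnnS.
  have M1 : 1 < M by rewrite /M; lia.
  have Lk0 : L k 0 = Diamond by rewrite /L addn0 modn_small.
  split.
  + have := cycle_fwd' n' M L HU HC HO Hcyc k M1 hk Lk0.
    by rewrite /L modnDml addSnnS.
  + set i := (k + M - n'.+1) %% M.
    have hi : i < M by rewrite /i ltn_pmod //; lia.
    have := cycle_bwd n' M L HU HC HO Hcyc i M1 hi.
    rewrite /L addn0 modn_mod modnDml addSnnS /i modnDml.
    have -> : k + M - n'.+1 + n'.+1 = k + M by lia.
    by rewrite modnDr modn_small // => /(_ hk0).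
Qed.
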